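(* Let $(X,d)$ be a metric space, $p>1$, $x_1,x_2,x_3\in X$ and $0\le r<t$. Then the function $$s\mapsto\sqrt{\bar H_p(x_1,r;x_2,s)}+\sqrt{\bar H_p(x_2,s;x_3,t)}$$ is increasing on $[t,+\infty)$, where $\bar H_p(x,r;y,t)=\mathfrak{M}_1(r,t)-\mathfrak{M}_{1-p}(r,t)\cos\big(d(x,y)\wedge\frac{\pi}{2}\big)$.
   Context: Power means: for $r,t\ge0$ and $q\neq0$, $\mathfrak{M}_q(r,t)=\big(\frac{r^q+t^q}{2}\big)^{1/q}$, except $\mathfrak{M}_q(r,t)=0$ when $q<0$ and $r=0$ or $t=0$. ''Increasing'' means non-decreasing. *)

(* Defs.v *)
From Stdlib Require Import Reals Lra.
Open Scope R_scope.

Definition is_metric {X : Type} (d : X -> X -> R) : Prop :=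
  (forall x y, 0 <= d x y) /\
  (forall x y, d x y = 0 <-> x = y) /\
  (forall x y, d x y = d y x) /\
  (forall x y z, d x z <= d x y + d y z).

(* Real power of a nonnegative base: 0^q := 0, r^q := Rpower r q for r > 0.
   Only used with q > 0 on possibly-zero bases, or with positive bases. *)
Definition rpow (r q : R) : R :=
  if Req_EM_T r 0 then 0 else Rpower r q.

Definition powmean (q r t : R) : R :=
  if Rlt_dec q 0 then
    (if Req_EM_T r 0 then 0
     else if Req_EM_T t 0 then 0
     else rpow ((rpow r q + rpow t q) / 2) (1 / q))
  else rpow ((rpow r q + rpow t q) / 2) (1 / q).

Definition Hbar {X : Type} (d : X -> X -> R) (p : R) (x : X) (r : R) (y : X) (t : R) : R :=
  powmean 1 r t - powmean (1 - p) r t * cos (Rmin (d x y) (PI / 2)).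

(* Main.v *)
Require Import Defs.
From Stdlib Require Import Reals.
From Stdlib Require Import Lra.
From Coquelicot Require Import Coquelicot.
Open Scope R_scope.

Lemma rpow_pos x y : 0 < x -> rpow x y = Rpower x y.
Proof. intros h. unfold rpow. destruct (Req_EM_T x 0); [lra|reflexivity]. Qed.

Lemma rpow_ge0 x y : 0 <= x -> 0 <= rpow x y.
Proof. intros h. unfold rpow. destruct (Req_EM_T x 0); [lra|].
  unfold Rpower. left; apply exp_pos. Qed.

Lemma powmean1 a b : 0 <= a -> 0 <= b -> powmean 1 a b = (a + b) / 2.
Proof.
  intros ha hb. unfold powmean. destruct (Rlt_dec 1 0); [lra|].
  replace (1/1) with 1 by field.
  assert (E : forall x, 0 <= x -> rpow x 1 = x).
  { intros x hx. unfold rpow. destruct (Req_EM_T x 0); [lra|]. apply Rpower_1; lra. }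
  rewrite (E a ha), (E b hb). apply E. lra.
Qed.

Lemma powmean_neg_pos q a s : q < 0 -> 0 < a -> 0 < s ->
  powmean q a s = exp ((1/q) * ln ((exp (q * ln a) + exp (q * ln s)) / 2)).
Proof.
  intros hq ha hs. unfold powmean. destruct (Rlt_dec q 0); [|lra].
  destruct (Req_EM_T a 0); [lra|]. destruct (Req_EM_T s 0); [lra|].
  rewrite (rpow_pos a), (rpow_pos s) by lra. unfold Rpower.
  rewrite rpow_pos. reflexivity.
  pose proof (exp_pos (q * ln a)); pose proof (exp_pos (q * ln s)); lra.
Qed.

Lemma powmean_neg_zero q s : q < 0 -> powmean q 0 s = 0.
Proof. intros hq. unfold powmean. destruct (Rlt_dec q 0); [|lra].
  destruct (Req_EM_T 0 0); [reflexivity|lra]. Qed.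

Lemma powmean_comm q a b : powmean q a b = powmean q b a.
Proof.
  unfold powmean. destruct (Rlt_dec q 0).
  - destruct (Req_EM_T a 0), (Req_EM_T b 0); try reflexivity.
    rewrite Rplus_comm. reflexivity.
  - rewrite Rplus_comm. reflexivity.
Qed.

Lemma key q a c s1 s2 : q < 0 -> 0 < a -> 0 <= c <= 1 -> a <= s1 -> s1 <= s2 ->
  s1/2 - c * powmean q a s1 <= s2/2 - c * powmean q a s2.
Proof.
  intros hq ha hc h1 h12.
  rewrite !powmean_neg_pos by lra.
  set (A := exp (q * ln a)).
  set (f := fun s => s/2 - c * exp((1/q) * ln((A + exp(q*ln s))/2))).
  set (df := fun s => 1/2 - c * (exp (q * ln s) / (s * (A + exp (q * ln s)))
                 * exp (1/q * ln ((A + exp (q * ln s))/2)))).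
  change (f s1 <= f s2).
  destruct (Req_dec s1 s2) as [e|ne]; [subst; lra|].
  destruct (MVT_cor3 f df s1 s2) as [z [hz1 [hz2 hz]]]; [lra| |].
  - intros x hx1 hx2. apply is_derive_Reals. unfold f, df.
    assert (0 < A) by apply exp_pos.
    pose proof (exp_pos (q * ln x)).
    auto_derive.
    + repeat split; lra.
    + change ((A + exp (q*ln x)) * / 2) with ((A + exp (q*ln x)) / 2). field. repeat split; lra.
  - rewrite hz. cut (0 <= df z). { intros; nra. }
    unfold df.
    assert (hz0 : 0 < z) by lra.
    set (S := exp (q * ln z)).
    assert (hS : 0 < S) by apply exp_pos.
    assert (hA : S <= A).
    { unfold S, A. destruct (Req_dec a z) as [->|nz]; [lra|].
      left. apply exp_increasing.
      assert (ln a < ln z) by (apply ln_increasing; lra). nra. }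
    set (E := exp (1 / q * ln ((A + S) / 2))).
    assert (hE0 : 0 < E) by apply exp_pos.
    assert (hE : E <= z).
    { unfold E. rewrite <- (exp_ln z) by lra.
      destruct (Req_dec (1 / q * ln ((A + S) / 2)) (ln z)) as [ee|ee];
        [rewrite ee; lra|].
      left. apply exp_increasing.
      assert (lnS : ln S = q * ln z) by (unfold S; apply ln_exp).
      assert (ln S <= ln ((A+S)/2)).
      { destruct (Req_dec S ((A+S)/2)) as [e2|e2]; [rewrite <- e2; lra|].
        left. apply ln_increasing; lra. }
      assert (hq1 : 1/q < 0).
      { unfold Rdiv. rewrite Rmult_1_l. apply Rinv_neg; lra. }
      assert (hinv : 1/q * q = 1) by (field; lra).
      assert (0 <= ln ((A+S)/2) - q * ln z) by lra.
      assert (HH : 1/q * (ln ((A+S)/2) - q * ln z) <= 0) by nra.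
      replace (1/q * (ln ((A+S)/2) - q * ln z)) with (1/q * ln ((A+S)/2) - ln z) in HH
        by (field; lra).
      lra. }
    assert (hdiv : S / (z * (A + S)) * E <= 1/2).
    { apply Rmult_le_reg_r with (2 * (z * (A+S))); [nra|].
      replace (S / (z * (A + S)) * E * (2 * (z * (A + S)))) with (2 * S * E)
        by (field; lra).
      assert (S*E <= S*z) by (apply Rmult_le_compat_l; lra).
      assert (z*S <= z*A) by (apply Rmult_le_compat_l; lra).
      lra. }
    assert (0 <= S / (z * (A + S)) * E).
    { apply Rmult_le_pos; [|lra]. left. apply Rdiv_lt_0_compat; nra. }
    nra.
Qed.

Lemma cos_bounds x : 0 <= x -> 0 <= cos (Rmin x (PI/2)) <= 1.
Proof.
  intros hx. split; [|apply COS_bound].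
  apply cos_ge_0.
  - assert (0 <= Rmin x (PI/2)). { apply Rmin_glb; [lra|]. pose proof PI_RGT_0; lra. }
    pose proof PI_RGT_0; lra.
  - apply Rmin_r.
Qed.

Theorem mainTheorem16 (X : Type) (d : X -> X -> R) (Hd : is_metric d)
  (p : R) (hp : 1 < p) (x1 x2 x3 : X) (r t : R) (hr : 0 <= r) (hrt : r < t) :
  forall s1 s2 : R, t <= s1 -> s1 <= s2 ->
    sqrt (Hbar d p x1 r x2 s1) + sqrt (Hbar d p x2 s1 x3 t)
    <= sqrt (Hbar d p x1 r x2 s2) + sqrt (Hbar d p x2 s2 x3 t).
Proof.
  intros s1 s2 h1 h12.
  destruct Hd as [Hpos _].
  pose proof (cos_bounds _ (Hpos x1 x2)) as c1.
  pose proof (cos_bounds _ (Hpos x2 x3)) as c2.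
  apply Rplus_le_compat; apply sqrt_le_1_alt; unfold Hbar;
    rewrite !powmean1 by lra.
  - destruct (Req_dec r 0) as [->|rn].
    + rewrite !powmean_neg_zero by lra. lra.
    + pose proof (key (1-p) r (cos (Rmin (d x1 x2) (PI / 2))) s1 s2 ltac:(lra) ltac:(lra) c1 ltac:(lra) h12).
      lra.
  - rewrite (powmean_comm _ s1 t), (powmean_comm _ s2 t).
    pose proof (key (1-p) t (cos (Rmin (d x2 x3) (PI / 2))) s1 s2 ltac:(lra) ltac:(lra) c2 h1 h12).
    lra.
Qed.
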